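(* Fix an integer $b\ge2$, $\gamma\in(0,1)$, let $\phi$ be a real analytic $\mathbb{Z}$-periodic function satisfying condition (H), and assume $\alpha<\min\{1,\frac{\log b}{\log(1/\gamma)}\}$. Then for any $\mathbf{v},\mathbf{w}\in\Lambda^{\#}$ there exist $\mathbf{i}\neq\mathbf{j}\in\Sigma$ and $x_{\mathbf{v},\mathbf{w}}\in I_{\mathbf{v}}$ such that $S'(x_{\mathbf{v},\mathbf{w}},\mathbf{w}\mathbf{i})-S'(x_{\mathbf{v},\mathbf{w}},\mathbf{w}\mathbf{j})\neq0$.
   Context: $\Lambda=\{0,\dots,b-1\}$, $\Lambda^{\#}=\bigcup_{n\ge1}\Lambda^n$, $\Sigma=\Lambda^{\mathbb{Z}_+}$, $\nu$ uniform on $\Lambda$; $\mathbf{w}\mathbf{i}$ denotes concatenation. $S(x,\mathbf{j})=\sum_{n\ge1}\gamma^{n-1}\phi\big(\frac{x+j_1+j_2b+\cdots+j_nb^{n-1}}{b^n}\big)$, $S'$ its $x$-derivative. Condition (H): for all $\mathbf{i}\neq\mathbf{j}\in\Sigma$, $x\mapsto S(x,\mathbf{j})-S(x,\mathbf{i})$ is not identically zero. $\alpha$ is the constant such that for Lebesgue-a.e. $x$ the image $m_x$ of $\nu^{\mathbb{Z}_+}$ under $\mathbf{j}\mapsto S(x,\mathbf{j})$ is exact dimensional with dimension $\alpha$. For $\mathbf{v}=v_1\cdots v_n$, $I_{\mathbf{v}}=\big[\frac{v_1+v_2b+\cdots+v_nb^{n-1}}{b^n},\frac{1+v_1+v_2b+\cdots+v_nb^{n-1}}{b^n}\big)$.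 *)

(* Defs.v *)
From HB Require Import structures.
From mathcomp Require Import all_boot all_order all_algebra.
From mathcomp Require Import all_classical all_reals all_analysis.
Set Implicit Arguments. Unset Strict Implicit. Unset Printing Implicit Defensive.
Import Order.TTheory GRing.Theory Num.Theory.
Import numFieldNormedType.Exports.
Local Open Scope classical_set_scope.
Local Open Scope ring_scope.

(* Sigma = Lambda^{Z_+}, Lambda = {0,...,b-1}; index k : nat stands for j_{k+1}.
   Finite words (elements of Lambda^#) are seq 'I_b of positive size. *)

Definition wconcat (b : nat) (w : seq 'I_b) (i : nat -> 'I_b) : nat -> 'I_b :=
  fun k => nth (i (k - size w)%N) w k.

Definition cyl (b : nat) (v : seq 'I_b) : set (nat -> 'I_b) :=
  [set j | [seq j k | k <- iota 0 (size v)] = v].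

(* the Bernoulli (uniform product) measure nu^{Z_+}, as the outer measure
   obtained from cylinder covers (Caratheodory construction) *)
Definition bernoulli_outer (R : realType) (b : nat) (E : set (nat -> 'I_b))
  : \bar R :=
  ereal_inf [set (\sum_(0 <= k <oo) (((b%:R : R) ^- (size (u k)))%:E))%E
            | u in [set u : nat -> seq 'I_b | E `<=` \bigcup_k cyl (u k)]].

Definition wval (R : realType) (b : nat) (v : seq 'I_b) : R :=
  \sum_(m < size v) ((nth 0%N (map val v) m)%:R * (b%:R) ^+ m).

Definition Iv (R : realType) (b : nat) (v : seq 'I_b) : set R :=
  [set x | wval R v / (b%:R) ^+ (size v) <= x < (1 + wval R v) / (b%:R) ^+ (size v)].

Definition S (R : realType) (b : nat) (gamma : R) (phi : R -> R)
  (x : R) (j : nat -> 'I_b) : R :=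
  limn (series (fun n => gamma ^+ n *
     phi ((x + \sum_(m < n.+1) ((j m : nat)%:R * (b%:R) ^+ m)) / (b%:R) ^+ n.+1))).

Arguments S {R} b gamma phi x j.

Definition S' (R : realType) (b : nat) (gamma : R) (phi : R -> R)
  (x : R) (j : nat -> 'I_b) : R :=
  derive1 (fun t : R => S b gamma phi t j) x.

Arguments S' {R} b gamma phi x j.

Definition condH (R : realType) (b : nat) (gamma : R) (phi : R -> R) : Prop :=
  forall i j : nat -> 'I_b, i <> j ->
    ~ (forall x, S b gamma phi x j - S b gamma phi x i = 0).

Arguments condH {R} b gamma phi.

Definition real_analytic (R : realType) (f : R -> R) : Prop :=
  forall x0 : R, exists2 r : R, 0 < r &
    exists a : nat -> R, forall x : R, `|x - x0| < r ->
      series (fun n => a n * (x - x0) ^+ n) @ \oo --> f x.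

Definition Zperiodic (R : realType) (f : R -> R) : Prop :=
  forall x : R, f (x + 1) = f x.

Definition mx (R : realType) (b : nat) (gamma : R) (phi : R -> R) (x : R)
  (A : set R) : \bar R :=
  bernoulli_outer R (fun j => A (S b gamma phi x j)).

Arguments mx {R} b gamma phi x A.

Definition exact_dimensional (R : realType) (m : set R -> \bar R) (a : R) : Prop :=
  m [set y | ~ ((fun r : R => ln (fine (m (ball y r))) / ln r) @ 0^'+ --> a)]
  = 0%E.

(* Main.v *)
Require Import Defs.
From HB Require Import structures.
From mathcomp Require Import all_boot all_order all_algebra.
From mathcomp Require Import all_classical all_reals all_analysis.
From mathcomp Require Import ring lra zify.
From Stdlib Require Import Lia.
Set Implicit Arguments. Unset Strict Implicit. Unset Printing Implicit Defensive.
Import Order.TTheory GRing.Theory Num.Theory.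
Import numFieldNormedType.Exports.
Local Open Scope classical_set_scope.
Local Open Scope ring_scope.

Section PS.
Variable R : realType.

Lemma geo_le (q : R) n : 0 <= q < 1 -> n%:R * q ^+ n <= (1 - q)^-1.
Proof.
move=> /andP[q0 q1].
have q1' : 0 < 1 - q by rewrite subr_gt0.
have -> : n%:R * q ^+ n = \sum_(i < n) q ^+ n by rewrite sumr_const card_ord mulr_natl.
apply: (@le_trans _ _ (\sum_(i < n) q ^+ i)).
  apply: ler_sum => i _; apply: ler_wiXn2l => //; [exact: ltW | exact: ltnW].
rewrite -[X in _ <= X]div1r ler_pdivlMr //.
have -> : (\sum_(i < n) q ^+ i) * (1 - q) = 1 - q ^+ n.
  have := subrX1 q n. move=> h.
  by rewrite mulrC -[1 - q]opprB mulNr -h opprB.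
by rewrite lerBlDr lerDl exprn_ge0.
Qed.
End PS.
Section PS2.
Variable R : realType.

Lemma pdiffs_cvg (c : R^nat) (rho z : R) : 0 <= z < rho ->
  cvgn (pseries c rho) -> cvgn (pseries (pseries_diffs c) z).
Proof.
move=> /andP[z0 zr] Cx.
have rho0 : 0 < rho by apply: le_lt_trans zr.
have [K [Kreal Kf]] := cvg_series_bounded Cx.
set M := `|K| + 1.
have KM : K < M by rewrite /M (le_lt_trans (ler_norm K)) // ltrDl.
have Mb n : `|c n * rho ^+ n| <= M by apply: (Kf M KM).
have M0 : 0 <= M by rewrite /M addr_ge0.
set r1 := (z + rho) / 2.
have zr1 : z < r1 by rewrite /r1; lra.
have r1r : r1 < rho by rewrite /r1; lra.
have r10 : 0 < r1 by lra.
set q := z / r1. set p := r1 / rho.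
have q0 : 0 <= q by rewrite divr_ge0 // ltW.
have q1 : q < 1 by rewrite ltr_pdivrMr // mul1r.
have p0 : 0 < p by rewrite divr_gt0.
have p1 : p < 1 by rewrite ltr_pdivrMr // mul1r.
apply: normed_cvg.
apply: (@series_le_cvg _ _ (geometric (M / rho * (1 + (1 - q)^-1)) p)).
- by move=> n /=; exact: normr_ge0.
- move=> n /=; rewrite !mulr_ge0 // ?invr_ge0 ?(ltW rho0) ?exprn_ge0 ?(ltW p0) //.
  by rewrite addr_ge0 // invr_ge0 subr_ge0 ltW.
- move=> n /=; rewrite /pseries_diffs.
  rewrite normrM normrM normr_nat normrX (ger0_norm z0).
  have h1 : `|c n.+1| <= M / rho ^+ n.+1.
    rewrite ler_pdivlMr ?exprn_gt0 //.
    by have := Mb n.+1; rewrite normrM normrX (gtr0_norm rho0).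
  have h2 : z ^+ n = rho ^+ n * (q ^+ n * p ^+ n).
    rewrite -exprMn -exprMn; congr (_ ^+ _).
    rewrite /q /p; field.
    by rewrite !gt_eqF.
  have h3 : n.+1%:R * q ^+ n <= 1 + (1 - q)^-1.
    rewrite -addn1 natrD mulrDl mul1r addrC lerD //.
      by rewrite exprn_ile1 // ltW.
    by apply: geo_le; rewrite q0 q1.
  apply: (@le_trans _ _ (n.+1%:R * (M / rho ^+ n.+1) * z ^+ n)).
    by rewrite ler_wpM2r ?exprn_ge0 // ler_wpM2l.
  rewrite h2 exprSr.
  have -> : n.+1%:R * (M / (rho ^+ n * rho)) * (rho ^+ n * (q ^+ n * p ^+ n))
     = M / rho * (n.+1%:R * q ^+ n) * p ^+ n.
    field. by rewrite gt_eqF // expf_neq0 // gt_eqF.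
  rewrite ler_wpM2r ?exprn_ge0 ?(ltW p0) // ler_wpM2l //.
  by rewrite divr_ge0 // ltW.
- by apply: is_cvg_geometric_series; rewrite gtr0_norm.
Qed.
End PS2.
Section PS3.
Variable R : realType.

Lemma is_derive_trans (g : R -> R) (x k d : R) :
  is_derive (x + k) 1 g d -> is_derive x 1 (fun u => g (u + k)) d.
Proof.
case=> dg <-.
have E : (fun h : R => h^-1 *: ((fun u => g (u + k)) (h *: (1:R) + x)
              - (fun u => g (u + k)) x))
       = (fun h => h^-1 *: (g (h *: 1 + (x + k)) - g (x + k))).
  by apply/funext => h; rewrite /= addrA.
apply: DeriveDef; first by rewrite /derivable E.
by rewrite /derive E.
Qed.

Variable phi : R -> R.
Hypothesis han : real_analytic phi.

Lemma phi_loc (x0 : R) : exists2 r : R, 0 < r & exists g1 : R -> R,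
  (forall x : R, `|x - x0| < r -> is_derive x (1:R) phi (g1 x)) /\
  {for x0, continuous g1}.
Proof.
have [r r0 [a ha]] := han x0.
have hc t : `|t| < r -> pseries a t @ \oo --> phi (x0 + t).
  by move=> tr; have := ha (x0 + t); rewrite (addrC x0) addrK; apply.
have cv t : `|t| < r -> cvgn (pseries a t).
  by move=> /hc h; apply/cvg_ex; eexists; exact: h.
have C0 : cvgn (pseries a (r * 7 / 8)).
  by apply: cv; rewrite ger0_norm; lra.
have C1 : cvgn (pseries (pseries_diffs a) (r * 3 / 4)).
  by apply: (pdiffs_cvg _ C0); apply/andP; split; lra.
have C2 : cvgn (pseries (pseries_diffs (pseries_diffs a)) (r * 5 / 8)).
  by apply: (pdiffs_cvg _ C1); apply/andP; split; lra.
have C3 : cvgn (pseries (pseries_diffs (pseries_diffs (pseries_diffs a))) (r / 2)).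
  by apply: (pdiffs_cvg _ C2); apply/andP; split; lra.
have CK0 : cvgn (pseries a (r / 2)) by apply: cv; rewrite ger0_norm; lra.
have CK1 : cvgn (pseries (pseries_diffs a) (r / 2)).
  by apply: (is_cvg_pseries_inside C1); rewrite !ger0_norm; lra.
have CK2 : cvgn (pseries (pseries_diffs (pseries_diffs a)) (r / 2)).
  by apply: (is_cvg_pseries_inside C2); rewrite !ger0_norm; lra.
pose g t := limn (pseries a t).
pose g1 t := limn (pseries (pseries_diffs a) t).
have D1 (t : R) : `|t| < r / 2 -> is_derive t (1:R) g (g1 t).
  move=> tK; apply: (pseries_snd_diffs CK0 CK1 CK2).
  by rewrite (ger0_norm (x := r / 2)) //; lra.
have D2 (t : R) : `|t| < r / 2 -> derivable g1 t (1:R).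
  move=> tK; have := @pseries_snd_diffs _ (pseries_diffs a) (r / 2) t CK1 CK2 C3.
  by rewrite (ger0_norm (x := r / 2)); [move=> /(_ tK) [] | lra].
have gphi u : `|u - x0| < r -> g (u - x0) = phi u.
  move=> ur; rewrite /g (cvg_lim _ (hc _ ur)) //.
  by rewrite addrC subrK.
exists (r / 4); first lra.
exists (fun x => g1 (x - x0)); split.
  move=> x xr.
  apply: (@near_eq_is_derive _ _ _ (fun u => g (u - x0))).
    near=> u.
    apply: gphi.
    have : `|u - x| < r / 4 by near: u; apply/nbhs_normP; exists (r / 4) => /=; [lra|
        move=> y; rewrite distrC].
    move=> hu; rewrite (_ : u - x0 = (u - x) + (x - x0)); last by ring.
    by rewrite (le_lt_trans (ler_normD _ _)) //; lra.
  by apply: is_derive_trans; apply: D1; apply: (lt_trans xr); lra.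
apply: (@continuous_comp _ _ _ (fun x => x - x0) g1).
  by apply: cvgB; [exact: cvg_id | exact: cvg_cst].
apply: differentiable_continuous; apply/derivable1_diffP; apply: D2.
by rewrite subrr normr0; lra.
Unshelve. all: by end_near.
Qed.
Lemma is_derive_D (f : R -> R) (x d : R) : is_derive x (1:R) f d -> derive1 f x = d.
Proof. by move=> h; rewrite derive1E; apply: derive_val. Qed.

Lemma phi_der (x : R) : is_derive x (1:R) phi ((derive1 phi) x).
Proof.
have [r r0 [g1 [hd _]]] := phi_loc x.
have /hd [dx _] : `|x - x| < r by rewrite subrr normr0.
by rewrite derive1E; apply: derivableP.
Qed.

Lemma phi_cont : continuous phi.
Proof.
move=> x; have [d _] := phi_der x.
exact/differentiable_continuous/derivable1_diffP.
Qed.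

Lemma phi'_cont : continuous (derive1 phi).
Proof.
move=> x0; have [r r0 [g1 [hd hc]]] := phi_loc x0.
have E : {near x0, g1 =1 (derive1 phi)}.
  near=> x.
  have hx : `|x - x0| < r.
    by near: x; apply/nbhs_normP; exists r => //= y; rewrite distrC.
  by rewrite (is_derive_D (hd x hx)).
have h := cvg_trans (near_eq_cvg E) hc.
have : g1 x0 = (derive1 phi) x0 by rewrite (is_derive_D (hd x0 _)) // subrr normr0.
move=> e; move: h; rewrite e; apply; exact: nbhs_filter.
Unshelve. all: by end_near.
Qed.
End PS3.
Section Per.
Variable R : realType.

Lemma per_nat (f : R -> R) : (forall x, f (x + 1) = f x) ->
  forall (n : nat) x, f (x + n%:R) = f x.
Proof.
move=> hp; elim=> [|n IH] x; first by rewrite addr0.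
by rewrite -natr1 addrA hp IH.
Qed.

Lemma per_red (f : R -> R) : (forall x, f (x + 1) = f x) ->
  forall x, exists2 y, 0 <= y <= 1 & f x = f y.
Proof.
move=> hp x; have /andP[h1 h2] := floor_itv x.
exists (x - (Num.floor x)%:~R).
  apply/andP; split; first by rewrite subr_ge0.
  by move: h2; rewrite intrD; lra.
move: (Num.floor x) h1 h2 => k h1 h2.
case: k h1 h2 => n h1 h2.
  by rewrite -(per_nat hp n (x - _)) subrK.
rewrite NegzE /= -(per_nat hp n.+1 x).
by rewrite mulrNz opprK.
Qed.

Lemma per_bounded (f : R -> R) : continuous f -> (forall x, f (x + 1) = f x) ->
  exists M, 0 <= M /\ forall x, `|f x| <= M.
Proof.
move=> fc hp.
have [c _ hc] := @EVT_max _ (fun x => `|f x|) 0 1 ler01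
  (continuous_subspaceT (fun x => continuous_comp (fc x) (@norm_continuous _ _ _))).
exists `|f c|; split => // x.
have [y /andP[y0 y1] ->] := per_red hp x.
by apply: hc; rewrite in_itv /= y0 y1.
Qed.
End Per.

Section SerGen.
Variable R : realType.

Lemma series_dom (u : nat -> R) (A q : R) : 0 <= A -> 0 <= q < 1 ->
  (forall n, `|u n| <= A * q ^+ n) ->
  cvgn (series u) /\ `|limn (series u)| <= A / (1 - q).
Proof.
move=> A0 /andP[q0 q1] hu.
have gc : cvgn (series (geometric A q)) by apply: is_cvg_geometric_series; rewrite ger0_norm.
have nc : cvgn [normed series u].
  apply: (series_le_cvg _ _ _ gc) => n /=; first exact: normr_ge0.
    by rewrite mulr_ge0 // exprn_ge0.
  exact: hu.
split; first exact: normed_cvg.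
apply: (le_trans (lim_series_norm nc)).
rewrite -(cvg_lim _ (cvg_geometric_series (a := A) (z := q) _)) //; last by rewrite ger0_norm.
apply: ler_lim => //; near=> n; apply: ler_sum => i _; exact: hu.
Unshelve. all: by end_near.
Qed.
End SerGen.

Section Main.
Variables (R : realType) (b : nat).
Hypothesis hb : (2 <= b)%N.
Local Notation B := (b%:R : R).

Lemma B2 : 2 <= B. Proof. by rewrite (ler_nat R 2 b). Qed.
Lemma B0 : 0 < B. Proof. by have := B2; lra. Qed.
Lemma Bn0 : B != 0. Proof. by rewrite gt_eqF // B0. Qed.

Definition Jn (n : nat) (j : nat -> 'I_b) : R := \sum_(m < n.+1) ((j m : nat)%:R * B ^+ m).

Definition Ser (psi : R -> R) (c : R) (x : R) (j : nat -> 'I_b) : R :=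
  limn (series (fun n => c ^+ n * psi ((x + Jn n j) / B ^+ n.+1))).

Definition consq (a : 'I_b) (s : nat -> 'I_b) : nat -> 'I_b :=
  fun m => if m is m'.+1 then s m' else a.

Lemma consq_eta (j : nat -> 'I_b) : consq (j 0%N) (fun m => j m.+1) = j.
Proof. by apply/funext => -[]. Qed.

Lemma Jn_cons a s n : Jn n.+1 (consq a s) = (a : nat)%:R + B * Jn n s.
Proof.
rewrite /Jn big_ord_recl /= expr0 mulr1; congr (_ + _).
rewrite mulr_sumr; apply: eq_bigr => i _ /=.
by rewrite /bump /= add1n exprS mulrCA.
Qed.

Lemma Jn0_cons a s : Jn 0 (consq a s) = (a : nat)%:R.
Proof. by rewrite /Jn big_ord1 /= expr0 mulr1. Qed.

Section SerBasic.
Variables (psi : R -> R) (c M : R).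
Hypothesis psiM : forall y, `|psi y| <= M.
Hypothesis c0 : 0 <= c.
Hypothesis c1 : c < 1.

Lemma M0 : 0 <= M. Proof. exact: le_trans (psiM 0). Qed.

Lemma Ser_dom x j :
  cvgn (series (fun n => c ^+ n * psi ((x + Jn n j) / B ^+ n.+1))) /\
  `|Ser psi c x j| <= M / (1 - c).
Proof.
apply: series_dom; first exact: M0.
  by rewrite c0 c1.
by move=> n; rewrite normrM normrX ger0_norm // mulrC ler_wpM2r // exprn_ge0.
Qed.

Lemma Ser_step x a s :
  Ser psi c x (consq a s) = psi ((x + (a : nat)%:R) / B) + c * Ser psi c ((x + (a : nat)%:R) / B) s.
Proof.
set y := (x + _) / B.
have [cv _] := Ser_dom y s.
rewrite /Ser; apply: cvg_lim => //.
rewrite -cvg_shiftS /=.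
set v := (fun n => _) in cv.
have E : (fun n => series (fun n0 => c ^+ n0 * psi ((x + Jn n0 (consq a s)) / B ^+ n0.+1)) n.+1)
   = (fun n => psi y + c * series v n).
  apply/funext => n; rewrite /series /= big_nat_recl //.
  rewrite expr0 mul1r Jn0_cons expr1 -/y; congr (_ + _).
  rewrite mulr_sumr; apply: eq_bigr => i _.
  rewrite /v exprS -mulrA; congr (_ * (_ * psi _)).
  rewrite Jn_cons /y exprS.
  by field; rewrite Bn0 expf_neq0 // Bn0.
rewrite E; apply: cvgD; first exact: cvg_cst.
by apply: cvgMr.
Qed.
End SerBasic.
End Main.

Section Lip.
Variable R : realType.
Lemma lip_of_deriv (f f' : R -> R) K : (forall y, is_derive y (1:R) f (f' y)) ->
  (forall y, `|f' y| <= K) -> forall u v, `|f u - f v| <= K * `|u - v|.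
Proof.
move=> fd fK.
have fc : continuous f.
  by move=> x; have [d _] := fd x; exact/differentiable_continuous/derivable1_diffP.
suff H : forall u v, u <= v -> `|f u - f v| <= K * `|u - v|.
  move=> u v; have [uv|vu] := leP u v; first exact: H.
  by rewrite distrC (distrC u); apply: H; rewrite ltW.
move=> u v uv.
have [c _ E] := MVT_segment uv (fun x _ => fd x) (continuous_subspaceT fc).
rewrite distrC E (distrC u) normrM (ger0_norm (x := v - u)) ?subr_ge0 //.
by rewrite ler_wpM2r ?subr_ge0.
Qed.

Lemma geo_small (C q e : R) : 0 <= q < 1 -> 0 < e -> exists k : nat, C * q ^+ k < e.
Proof.
move=> /andP[q0 q1] e0.
have h := cvg_geometric C (z := q) (ltac:(by rewrite ger0_norm)).
move/cvgrPdist_lt : h => /(_ e e0) [N _ hN].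
exists N; have := hN N (leqnn N); rewrite /= sub0r normrN.
by move=> /(le_lt_trans (ler_norm _)).
Qed.
End Lip.

Section SerDer.
Variables (R : realType) (b : nat).
Hypothesis hb : (2 <= b)%N.
Local Notation B := (b%:R : R).

Lemma qB (c : R) : 0 <= c -> c < 1 -> 0 <= c / B < 1.
Proof.
move=> c0 c1; have B1 : 1 <= B by have := B2 R hb; lra.
rewrite divr_ge0 ?(ltW (B0 R hb)) //=.
rewrite ltr_pdivrMr ?B0 //; apply: (lt_le_trans c1).
by rewrite -{1}(mulr1 1) ler_pM.
Qed.

Lemma Ser_lip (psi : R -> R) (c M K : R) :
  (forall y, `|psi y| <= M) -> 0 <= c -> c < 1 -> 0 <= K ->
  (forall u v, `|psi u - psi v| <= K * `|u - v|) ->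
  forall u v (j : nat -> 'I_b), `|Ser psi c u j - Ser psi c v j| <= K / B / (1 - c / B) * `|u - v|.
Proof.
move=> psiM c0 c1 K0 psiK u v j.
have [cu _] := Ser_dom (b := b) psiM c0 c1 u j.
have [cv _] := Ser_dom (b := b) psiM c0 c1 v j.
rewrite /Ser -lim_seriesB //.
have tb : forall n, `|c ^+ n * psi ((u + Jn R n j) / B ^+ n.+1)
     - c ^+ n * psi ((v + Jn R n j) / B ^+ n.+1)| <= K / B * `|u - v| * (c / B) ^+ n.
  move=> n /=; rewrite -mulrBr normrM normrX ger0_norm //.
  apply: (le_trans (ler_wpM2l (exprn_ge0 _ c0) (psiK _ _))).
  have -> : (u + Jn R n j) / B ^+ n.+1 - (v + Jn R n j) / B ^+ n.+1
          = (u - v) / B ^+ n.+1 by field; rewrite expf_neq0 // Bn0.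
  rewrite normrM normfV normrX (ger0_norm (ltW (B0 R hb))) exprS.
  rewrite le_eqVlt; apply/orP; left; apply/eqP.
  by rewrite expr_div_n; field; rewrite expf_neq0 // Bn0.
have [_ h] := @series_dom R (fun n => c ^+ n * psi ((u + Jn R n j) / B ^+ n.+1)
     - c ^+ n * psi ((v + Jn R n j) / B ^+ n.+1)) (K / B * `|u - v|) (c / B)
  (ltac:(by rewrite !mulr_ge0 // invr_ge0 ltW // B0)) (qB c0 c1) tb.
apply: (le_trans h); rewrite le_eqVlt; apply/orP; left; apply/eqP.
by rewrite mulrAC.
Qed.
End SerDer.

Section SerDer2.
Variables (R : realType) (b : nat).
Hypothesis hb : (2 <= b)%N.
Local Notation B := (b%:R : R).

Lemma near_dB (P : R -> Prop) : (\forall d \near 0^', P d) -> \forall h \near 0^', P (h / B).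
Proof.
move=> /nbhs_normP [r /= r0 hr]; apply/nbhs_normP; exists (r * B) => /=.
  by rewrite mulr_gt0 // B0.
move=> y hy yn0; apply: hr.
  move: hy; rewrite /ball_ /= !sub0r !normrN normrM normfV (gtr0_norm (B0 R hb)).
  by rewrite ltr_pdivrMr ?B0.
by rewrite mulf_neq0 // invr_eq0 Bn0.
Qed.
End SerDer2.

Section SerDer3.
Variables (R : realType) (b : nat).
Hypothesis hb : (2 <= b)%N.
Local Notation B := (b%:R : R).
Variables (psi psi' : R -> R) (c M M1 : R).
Hypothesis psiM : forall y, `|psi y| <= M.
Hypothesis psi'M : forall y, `|psi' y| <= M1.
Hypothesis psid : forall y : R, is_derive y (1:R) psi (psi' y).
Hypothesis c0 : 0 <= c.
Hypothesis c1 : c < 1.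

Local Notation psi1 := (fun u => psi' u / B).
Local Notation LS := (M1 / B / (1 - c / B)).
Local Notation q := (c / B).

Lemma M1_0 : 0 <= M1. Proof. exact: le_trans (psi'M 0). Qed.
Lemma psi1M y : `|psi1 y| <= M1 / B.
Proof. by rewrite normrM normfV (gtr0_norm (B0 R hb)) ler_pM2r ?invr_gt0 ?B0. Qed.
Lemma LS0 : 0 <= LS.
Proof. have /andP[_ q1] := qB hb c0 c1. by rewrite !divr_ge0 ?M1_0 ?(ltW (B0 R hb)) // subr_ge0 ltW. Qed.

Lemma Slip u v (j : nat -> 'I_b) : `|Ser psi c u j - Ser psi c v j| <= LS * `|u - v|.
Proof. exact: (Ser_lip hb psiM c0 c1 M1_0 (lip_of_deriv psid psi'M)). Qed.

Lemma Tbound x (j : nat -> 'I_b) : `|Ser psi1 q x j| <= LS.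
Proof.
have /andP[q0 q1] := qB hb c0 c1.
by have [_ ] := Ser_dom (b := b) psi1M q0 q1 x j.
Qed.

Lemma CD k : forall x e, 0 < e -> \forall h \near 0^', forall j : nat -> 'I_b,
  `|h^-1 * (Ser psi c (h + x) j - Ser psi c x j) - Ser psi1 q x j| < e + 2 * LS * q ^+ k.
Proof.
have /andP[q0 q1] := qB hb c0 c1.
elim: k => [|k IH] x e e0.
  near=> h => j.
  have hn0 : h != 0 by near: h; exact: nbhs_dnbhs_neq.
  apply: (le_lt_trans (ler_normB _ _)).
  have h1 : `|h^-1 * (Ser psi c (h + x) j - Ser psi c x j)| <= LS.
    rewrite normrM normfV ler_pdivrMl ?normr_gt0 // mulrC.
    by have := Slip (h + x) x j; rewrite addrK.
  have := Tbound x j; rewrite expr0 mulr1; lra.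
pose y (a : 'I_b) := (x + (a : nat)%:R) / B.
have H1 (a : 'I_b) : \forall d \near 0^',
    `|psi' (y a) - d^-1 * (psi (d + y a) - psi (y a))| < e / 2.
  have [dd dv] := psid (y a).
  have cv : (fun d : R => d^-1 *: (psi (d *: 1 + y a) - psi (y a))) @ 0^' --> psi' (y a).
    by rewrite -dv; exact: dd.
  move/cvgrPdist_lt : cv => /(_ (e / 2) (ltac:(lra))).
  by apply: filterS => d /=; rewrite [_%:A]mulr1.
have H2 (a : 'I_b) := IH (y a) (e / 2) (ltac:(lra)).
pose P' (a : 'I_b) (d : R) :=
   `|psi' (y a) - d^-1 * (psi (d + y a) - psi (y a))| < e / 2 /\
   forall s : nat -> 'I_b, `|d^-1 * (Ser psi c (d + y a) s - Ser psi c (y a) s)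
        - Ser psi1 q (y a) s| < e / 2 + 2 * LS * q ^+ k.
pose P (a : 'I_b) (h : R) := P' a (h / B).
have H' (a : 'I_b) : \forall h \near 0^', P a h.
  apply: (@near_dB R b hb (P' a)).
  by apply: filterS2 (H1 a) (H2 a) => d A1 A2; split.
have H := filter_forall _ H'.
near=> h.
have HA : forall a, P a h by near: h; exact: H.
have hn0 : h != 0 by near: h; exact: nbhs_dnbhs_neq.
move=> j.
have [A1 A2] := HA (j 0%N).
rewrite -(consq_eta j).
set a := j 0%N; set s := (fun m => j m.+1).
rewrite !(Ser_step hb psiM c0 c1) (Ser_step hb psi1M q0 q1).
have -> : (h + x + (a : nat)%:R) / B = h / B + y a by rewrite /y; field; rewrite Bn0.
rewrite -/(y a).
pose D1 := (h / B)^-1 * (psi (h / B + y a) - psi (y a)).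
pose D2 := (h / B)^-1 * (Ser psi c (h / B + y a) s - Ser psi c (y a) s).
have -> : h^-1 * (psi (h / B + y a) + c * Ser psi c (h / B + y a) s -
        (psi (y a) + c * Ser psi c (y a) s)) - (psi' (y a) / B + q * Ser psi1 q (y a) s)
   = (D1 - psi' (y a)) / B + q * (D2 - Ser psi1 q (y a) s).
  by rewrite /D1 /D2; field; rewrite hn0 Bn0.
apply: (le_lt_trans (ler_normD _ _)).
rewrite normrM normfV (gtr0_norm (B0 R hb)) normrM (ger0_norm q0).
have iB : B^-1 <= 1 by rewrite invf_le1 ?B0 //; have := B2 R hb; lra.
have iB0 : 0 < B^-1 by rewrite invr_gt0 B0.
have e1 : `|D1 - psi' (y a)| / B < e / 2.
  have := A1; rewrite distrC => A1'.
  have := normr_ge0 (D1 - psi' (y a)); nra.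
have e2 : q * `|D2 - Ser psi1 q (y a) s| <= e / 2 + 2 * LS * q ^+ k.+1.
  apply: (le_trans (ler_wpM2l q0 (ltW (A2 s)))).
  rewrite mulrDr exprS; have : q * (e / 2) <= e / 2.
    by rewrite -[X in _ <= X]mul1r ler_wpM2r //; lra.
  move=> qe; rewrite mulrCA mulrA (mulrC q). lra.
lra.
Unshelve. all: by end_near.
Qed.

Lemma Ser_is_derive x (j : nat -> 'I_b) :
  is_derive x (1:R) (fun t => Ser psi c t j) (Ser psi1 q x j).
Proof.
have /andP[q0 q1] := qB hb c0 c1.
have cv : (fun h : R => h^-1 *: ((fun t => Ser psi c t j) (h *: 1 + x) - Ser psi c x j))
    @ 0^' --> Ser psi1 q x j.
  apply/cvgrPdist_lt => e e0.
  have [k hk] := geo_small (2 * LS) (qB hb c0 c1) (ltac:(lra) : 0 < e / 2).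
  have := CD k x (ltac:(lra) : 0 < e / 2).
  apply: filterS => h /(_ j) hh.
  rewrite /= [_%:A]mulr1 distrC; lra.
apply: DeriveDef; first by apply/cvg_ex; eexists; exact: cv.
by rewrite /derive; exact: cvg_lim cv.
Qed.
End SerDer3.

Section SerCont.
Variables (R : realType) (b : nat).
Hypothesis hb : (2 <= b)%N.
Local Notation B := (b%:R : R).
Variables (psi : R -> R) (c M : R).
Hypothesis psiM : forall y, `|psi y| <= M.
Hypothesis psic : continuous psi.
Hypothesis c0 : 0 <= c.
Hypothesis c1 : c < 1.

Lemma near_affine (a x : R) (P : R -> Prop) :
  (\forall u \near (x + a) / B, P u) -> \forall x' \near x, P ((x' + a) / B).
Proof.
move=> hP.
have cg : (fun x' => (x' + a) / B) @ x --> (x + a) / B.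
  by apply: cvgMr_tmp; apply: cvgD; [exact: cvg_id | exact: cvg_cst].
exact: cg hP.
Qed.

Lemma CT k : forall x e, 0 < e -> \forall x' \near x, forall j : nat -> 'I_b,
  `|Ser psi c x' j - Ser psi c x j| < e + 2 * (M / (1 - c)) * c ^+ k.
Proof.
elim: k => [|k IH] x e e0.
  near=> x' => j.
  have [_ h1] := Ser_dom (b := b) psiM c0 c1 x' j.
  have [_ h2] := Ser_dom (b := b) psiM c0 c1 x j.
  apply: (le_lt_trans (ler_normB _ _)); rewrite expr0 mulr1; lra.
pose y (a : 'I_b) := (x + (a : nat)%:R) / B.
pose P' (a : 'I_b) (u : R) := `|psi u - psi (y a)| < e / 2 /\
   forall s : nat -> 'I_b, `|Ser psi c u s - Ser psi c (y a) s| < e / 2 + 2 * (M / (1 - c)) * c ^+ k.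
pose P (a : 'I_b) (x' : R) := P' a ((x' + (a : nat)%:R) / B).
have H' (a : 'I_b) : \forall x' \near x, P a x'.
  apply: (@near_affine _ x (P' a)).
  have pc : {for y a, continuous psi} by apply: psic.
  move/cvgrPdist_lt : pc => /(_ (e / 2) (ltac:(lra))) pc.
  apply: filterS2 pc (IH (y a) (e / 2) (ltac:(lra))) => u A1 A2; split => //.
  by rewrite distrC.
have H := filter_forall _ H'.
near=> x'.
have HA : forall a, P a x' by near: x'; exact: H.
move=> j; have [A1 A2] := HA (j 0%N).
rewrite -(consq_eta j).
set a := j 0%N; set s := (fun m => j m.+1).
rewrite !(Ser_step hb psiM c0 c1) -/(y a).
have -> : psi ((x' + (a : nat)%:R) / B) + c * Ser psi c ((x' + (a : nat)%:R) / B) s -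
    (psi (y a) + c * Ser psi c (y a) s)
   = (psi ((x' + (a : nat)%:R) / B) - psi (y a)) + c * (Ser psi c ((x' + (a : nat)%:R) / B) s - Ser psi c (y a) s)
  by ring.
apply: (le_lt_trans (ler_normD _ _)).
rewrite normrM (ger0_norm c0).
have := A2 s => A2'.
have : c * `|Ser psi c ((x' + (a : nat)%:R) / B) s - Ser psi c (y a) s|
   <= c * (e / 2 + 2 * (M / (1 - c)) * c ^+ k) by rewrite ler_wpM2l // ltW.
rewrite exprS.
have := normr_ge0 (Ser psi c ((x' + (a : nat)%:R) / B) s - Ser psi c (y a) s).
have Mc : 0 <= M / (1 - c) by rewrite divr_ge0 ?(M0 psiM) // subr_ge0 ltW.
have := exprn_ge0 k c0.
have ce : c * (e / 2) <= e / 2.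
  by rewrite -[X in _ <= X]mul1r ler_wpM2r ?ltW //; lra.
move=> ck nn hh; move: A1.
set X := `|Ser psi c _ s - _|. set Y := `|psi _ - _|. set K := M / (1 - c). set p := c ^+ k.
move=> A1; rewrite mulrA (mulrC _ c) -mulrA.
apply: (le_lt_trans (lerD (lexx Y) hh)).
rewrite mulrDr /K /p; lra.
Unshelve. all: by end_near.
Qed.

Lemma Ser_cont (j : nat -> 'I_b) : continuous (fun x => Ser psi c x j).
Proof.
move=> x; apply/cvgrPdist_lt => e e0.
have cc : 0 <= c < 1 by rewrite c0 c1.
have [k hk] := geo_small (2 * (M / (1 - c))) cc (ltac:(lra) : 0 < e / 2).
have := CT k x (ltac:(lra) : 0 < e / 2).
apply: filterS => x' /(_ j) hh.
rewrite distrC; lra.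
Qed.
End SerCont.

Section Odo.
Local Open Scope nat_scope.
Variable b : nat.
Hypothesis hb : (2 <= b)%N.

Lemma b0 : (0 < b)%N. Proof. by apply: leq_trans hb. Qed.

Lemma val_insubd_mod (d : 'I_b) n : val (insubd d (n %% b)) = n %% b.
Proof. by rewrite val_insubd ltn_pmod // b0. Qed.

Definition allmax (i : nat -> 'I_b) m := \big[andb/true]_(k < m) ((i k : nat) == b.-1).
Definition allzero (i : nat -> 'I_b) m := \big[andb/true]_(k < m) ((i k : nat) == 0%N).

Lemma allmaxS i m : allmax i m.+1 = allmax i m && ((i m : nat) == b.-1).
Proof. by rewrite /allmax big_ord_recr. Qed.
Lemma allzeroS i m : allzero i m.+1 = allzero i m && ((i m : nat) == 0%N).
Proof. by rewrite /allzero big_ord_recr. Qed.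
Lemma allmax0 i : allmax i 0. Proof. by rewrite /allmax big_ord0. Qed.
Lemma allzero0 i : allzero i 0. Proof. by rewrite /allzero big_ord0. Qed.

Definition succq (i : nat -> 'I_b) : nat -> 'I_b :=
  fun m => if allmax i m then insubd (i m) ((i m).+1 %% b) else i m.
Definition predq (i : nat -> 'I_b) : nat -> 'I_b :=
  fun m => if allzero i m then insubd (i m) ((i m + b.-1) %% b) else i m.

Definition jn n (i : nat -> 'I_b) : nat := \sum_(m < n.+1) (i m : nat) * b ^ m.
Lemma jnS n i : jn n.+1 i = jn n i + (i n.+1 : nat) * b ^ n.+1.
Proof. by rewrite /jn big_ord_recr. Qed.

Lemma jn_succ n i : jn n (succq i) + allmax i n.+1 * b ^ n.+1 = jn n i + 1.
Proof.
have bP := prednK b0.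
elim: n => [|n IH].
  rewrite /jn !big_ord1 /succq allmax0 allmaxS allmax0 /= expn0 expn1 !muln1.
  rewrite val_insubd_mod.
  have := ltn_ord (i 0%N); case: eqP => [->|ne] ib.
    by rewrite bP modnn mul1n add0n addn1 bP.
  have il : (i 0%N).+1 < b by lia.
  by rewrite modn_small ?mul0n ?addn0 ?addn1.
rewrite jnS [jn n.+1 i]jnS allmaxS /succq.
move: IH; rewrite /succq.
case: (allmax i n.+1) => /= IH.
  rewrite val_insubd_mod.
  have := ltn_ord (i n.+1); case: eqP => [ei|ne] ib.
    rewrite ei bP modnn mul0n addn0 mul1n expnS.
    rewrite ei in ib *.
    have : (b.-1 * b ^ n.+1 + b ^ n.+1 = b * b ^ n.+1)%N by rewrite addnC -mulSn bP.
    lia.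
  have il : ((i n.+1).+1 < b)%N by lia.
  rewrite modn_small // mul0n addn0 mulSn.
  lia.
by rewrite mul0n addn0 in IH *; lia.
Qed.

Lemma pred_mod (v : nat) : v < b -> (v + b.-1) %% b = if v is v'.+1 then v' else b.-1.
Proof.
have bP := prednK b0.
case: v => [|v] vb; first by rewrite add0n modn_small // ltn_predL b0.
rewrite (_ : v.+1 + b.-1 = v + b); last by lia.
by rewrite modnDr modn_small //; lia.
Qed.

Lemma allmax_pred i m : allmax (predq i) m = allzero i m.
Proof.
elim: m => [|m IH]; first by rewrite allmax0 allzero0.
rewrite allmaxS allzeroS IH /predq.
case: (allzero i m) => //=.
rewrite val_insubd_mod pred_mod //.
have := ltn_ord (i m).
case: (i m : nat) => [|v] vb; first by rewrite !eqxx.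
by apply/negbTE/eqP; lia.
Qed.

Lemma succq_predq i : succq (predq i) = i.
Proof.
have bP := prednK b0.
apply/funext => m; apply: val_inj.
rewrite /succq allmax_pred /predq.
case: (allzero i m) => //=.
rewrite !val_insubd_mod pred_mod //.
have := ltn_ord (i m).
case: (i m : nat) => [|v] vb; first by rewrite bP modnn.
by rewrite modn_small.
Qed.
End Odo.

Section SerOdo.
Variables (R : realType) (b : nat).
Hypothesis hb : (2 <= b)%N.
Local Notation B := (b%:R : R).

Lemma Jn_nat n (i : nat -> 'I_b) : Jn R n i = (jn n i)%:R.
Proof.
rewrite /Jn /jn natr_sum; apply: eq_bigr => k _.
by rewrite natrM natrX.
Qed.

Lemma Ser_succ (psi : R -> R) (c x : R) (i : nat -> 'I_b) :
  (forall u, psi (u + 1) = psi u) ->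
  Ser psi c (x + 1) i = Ser psi c x (succq i).
Proof.
move=> hp; rewrite /Ser.
suff -> : (fun n : nat => c ^+ n * psi ((x + 1 + Jn R n i) / B ^+ n.+1))
   = (fun n => c ^+ n * psi ((x + Jn R n (succq i)) / B ^+ n.+1)) by [].
apply/funext => n.
congr (_ * _).
have E := congr1 (fun m : nat => (m%:R : R)) (jn_succ hb n i).
rewrite /= !natrD natrM natrX -!Jn_nat in E.
have -> : (x + Jn R n (succq i)) / B ^+ n.+1
    = (x + 1 + Jn R n i) / B ^+ n.+1 - (allmax i n.+1)%:R.
  have Bn : B ^+ n.+1 != 0 by rewrite expf_neq0 // Bn0.
  apply: (mulIf Bn); rewrite mulrBl !divfK //.
  move: E; case: (allmax i n.+1) => /= E; lra.
case: (allmax i n.+1) => /=; last by rewrite subr0.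
by rewrite -[in LHS](subrK 1 ((x + 1 + Jn R n i) / B ^+ n.+1)) hp.
Qed.
End SerOdo.

Section Final.
Variables (R : realType) (b : nat) (gamma : R) (phi : R -> R).
Hypothesis hb : (2 <= b)%N.
Hypothesis hg0 : 0 < gamma.
Hypothesis hg1 : gamma < 1.
Hypothesis han : real_analytic phi.
Hypothesis hper : Zperiodic phi.
Local Notation B := (b%:R : R).
Local Notation phi' := (derive1 phi).
Local Notation psi1 := (fun u => phi' u / B).
Local Notation q := (gamma / B).

Lemma phi'_per u : phi' (u + 1) = phi' u.
Proof.
have h := is_derive_trans (phi_der han (u + 1)).
have E : (fun t => phi (t + 1)) = phi by apply/funext => t; exact: hper.
rewrite E in h.
by rewrite (is_derive_D h).
Qed.

Lemma bnds : exists M M1 : R, (forall y, `|phi y| <= M) /\ (forall y, `|phi' y| <= M1).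
Proof.
have [M [_ hM]] := per_bounded (phi_cont han) hper.
have [M1 [_ hM1]] := per_bounded (phi'_cont han) phi'_per.
by exists M, M1.
Qed.

Definition T x (j : nat -> 'I_b) := Ser psi1 q x j.

Lemma gc : 0 <= gamma. Proof. exact: ltW. Qed.

Lemma S_der x (j : nat -> 'I_b) : is_derive x (1:R) (fun t => S b gamma phi t j) (T x j).
Proof.
have [M [M1 [hM hM1]]] := bnds.
exact: (Ser_is_derive hb hM hM1 (phi_der han) gc hg1).
Qed.

Lemma S'T x (j : nat -> 'I_b) : S' b gamma phi x j = T x j.
Proof. exact: is_derive_D (S_der x j). Qed.

Lemma psi1_bnd : exists M, forall y, `|psi1 y| <= M.
Proof.
have [M [M1 [hM hM1]]] := bnds.
exists (M1 / B) => y.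
by rewrite normrM normfV (gtr0_norm (B0 R hb)) ler_pM2r ?invr_gt0 ?B0.
Qed.

Lemma T_cont (j : nat -> 'I_b) : continuous (fun x => T x j).
Proof.
have [M hM] := psi1_bnd.
have /andP[q0 q1] := qB hb gc hg1.
apply: (Ser_cont hb hM _ q0 q1).
move=> x; apply: cvgMr_tmp; exact: phi'_cont.
Qed.

Lemma T_step x a s : T x (consq a s) = psi1 ((x + (a : nat)%:R) / B) + q * T ((x + (a : nat)%:R) / B) s.
Proof.
have [M hM] := psi1_bnd.
have /andP[q0 q1] := qB hb gc hg1.
exact: (Ser_step hb hM q0 q1).
Qed.

Lemma T_succ x i : T (x + 1) i = T x (succq i).
Proof.
apply: (Ser_succ hb) => u /=; by rewrite phi'_per.
Qed.

Definition Z y := forall i j : nat -> 'I_b, T y i = T y j.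
Definition d0 : 'I_b := Ordinal (b0 hb).
Definition d1 : 'I_b := Ordinal hb.

Lemma qn0 : q != 0.
Proof. by rewrite mulf_neq0 ?invr_eq0 ?Bn0 // gt_eqF. Qed.

Lemma Z_div y : Z y -> Z (y / B).
Proof.
move=> zy i j; have := zy (consq d0 i) (consq d0 j).
rewrite !T_step /= addr0 => /addrI /(mulfI qn0); exact.
Qed.

Lemma Z_divn k y : Z y -> Z (y / B ^+ k).
Proof.
elim: k => [|k IH] zy; first by rewrite expr0 divr1.
have -> : y / B ^+ k.+1 = (y / B ^+ k) / B.
  by rewrite exprSr invfM mulrA.
exact/Z_div/IH.
Qed.

Lemma Z_succ y : Z y -> Z (y + 1).
Proof. by move=> zy i j; rewrite !T_succ. Qed.

Lemma Z_pred y : Z y -> Z (y - 1).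
Proof.
move=> zy i j; rewrite -(succq_predq hb i) -(succq_predq hb j) -!T_succ subrK.
exact: zy.
Qed.

Lemma Z_addn y n : Z y -> Z (y + n%:R).
Proof.
elim: n => [|n IH] zy; first by rewrite addr0.
by rewrite -natr1 addrA; apply/Z_succ/IH.
Qed.

Lemma Z_subn y n : Z y -> Z (y - n%:R).
Proof.
elim: n => [|n IH] zy; first by rewrite subr0.
by rewrite -natr1 opprD addrA; apply/Z_pred/IH.
Qed.

Lemma Z_int y (k : int) : Z y -> Z (y + k%:~R).
Proof.
case: k => n zy; first exact: Z_addn.
by rewrite NegzE mulrNz; apply: Z_subn.
Qed.

Lemma Z_all y0 : Z y0 -> forall t, Z t.
Proof.
move=> z0 t i j; apply/eqP; rewrite -subr_eq0; apply/eqP.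
pose E x := T x i - T x j.
have Ec : {for t, continuous E}.
  by apply: cvgB; [exact: T_cont | exact: T_cont].
case: (eqVneq (E t) 0) => // ne.
have e0 : 0 < `|E t| by rewrite normr_gt0.
move/cvgrPdist_lt : Ec => /(_ _ e0) /nbhs_normP [d d0 hd].
have Bi : 0 <= B^-1 < 1.
  by rewrite invr_ge0 ltW ?B0 //= invf_lt1 ?B0 //; have := B2 R hb; lra.
have [k hk] := geo_small 1 Bi d0.
pose m := Num.floor (t * B ^+ k - y0).
pose t' := (y0 + m%:~R) / B ^+ k.
have zt' : Z t' by apply/Z_divn/Z_int.
have Bk : 0 < B ^+ k by rewrite exprn_gt0 ?B0.
have /andP[f1 f2] := floor_itv (t * B ^+ k - y0).
have tt' : `|t - t'| < d.
  have -> : t - t' = (t * B ^+ k - y0 - m%:~R) / B ^+ k.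
    by rewrite /t'; field; rewrite gt_eqF.
  rewrite normrM normfV (gtr0_norm Bk) ger0_norm; last by rewrite subr_ge0.
  apply: (lt_trans _ hk); rewrite mul1r exprVn -[X in _ < X]mul1r ltr_pM2r ?invr_gt0 //.
  by move: f2; rewrite intrD /m; lra.
have Et' : E t' = 0 by rewrite /E (zt' i j) subrr.
have := hd t' tt'.
clearbody E t' m.
by rewrite Et' subr0 ltxx.
Qed.

Lemma wconcat_nil (i : nat -> 'I_b) : wconcat [::] i = i.
Proof. by apply/funext => k; rewrite /wconcat nth_nil subn0. Qed.

Lemma wconcat_cons a w (i : nat -> 'I_b) : wconcat (a :: w) i = consq a (wconcat w i).
Proof. by apply/funext => -[|k] //; rewrite /wconcat /= subSS. Qed.

Lemma T_prefix w : forall x, exists y, forall i j : nat -> 'I_b,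
  T x (wconcat w i) - T x (wconcat w j) = q ^+ (size w) * (T y i - T y j).
Proof.
elim: w => [|a w IH] x.
  by exists x => i j; rewrite !wconcat_nil expr0 mul1r.
have [y hy] := IH ((x + (a : nat)%:R) / B).
exists y => i j; rewrite !wconcat_cons.
rewrite !T_step.
rewrite (_ : size (a :: w) = (size w).+1) // exprS -(mulrA q) -hy.
move: (T _ (wconcat w i)) (T _ (wconcat w j)) (psi1 _) q => A1 A2 P Q; ring.
Qed.


Lemma Zall_false : condH b gamma phi -> (forall t, Z t) -> False.
Proof.
move=> hH zall.
have [M [M1 [hM hM1]]] := bnds.
pose s : nat -> 'I_b := fun _ => d0.
pose i0 := consq d0 s. pose i1 := consq d1 s.
pose F x := S b gamma phi x i0.
pose D x := S b gamma phi x i0 - S b gamma phi x i1.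
have Dd : forall y, is_derive y (1:R) D 0.
  move=> y; have -> : (0:R) = T y i0 - T y i1 by rewrite (zall y i0 i1) subrr.
  exact: is_deriveB (S_der y i0) (S_der y i1).
have Dc u v : D u = D v.
  have := lip_of_deriv Dd (fun _ => (ltac:(by rewrite normr0) : `|(0:R)| <= 0)) u v.
  by rewrite mul0r normr_le0 subr_eq0 => /eqP.
have Fs x : S b gamma phi x i1 = F (x + 1).
  rewrite /F /i0 /i1.
  change (Ser phi gamma x (consq d1 s) = Ser phi gamma (x + 1) (consq d0 s)).
  by rewrite !(Ser_step hb hM gc hg1) /= addr0.
have Fn n : F 0 - F n%:R = n%:R * D 0.
  elim: n => [|n IH]; first by rewrite subrr mul0r.
  have Dn : D n%:R = F n%:R - F (n%:R + 1) by rewrite /D Fs.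
  rewrite -natr1 mulrDl mul1r -IH (Dc 0 n%:R) Dn.
  move: (F 0) (F n%:R) (F (n%:R + 1)) => a1 a2 a3; ring.
have FM x : `|F x| <= M / (1 - gamma) := (Ser_dom hM gc hg1 x i0).2.
have D00 : D 0 = 0.
  apply/eqP/negPn/negP => ne.
  have cpos : 0 < `|D 0| by rewrite normr_gt0.
  pose n := (Num.trunc (2 * (M / (1 - gamma)) / `|D 0|)).+1.
  have hn : 2 * (M / (1 - gamma)) / `|D 0| < n%:R := truncnS_gt _.
  rewrite ltr_pdivrMr // in hn.
  have h : `|F 0 - F n%:R| <= 2 * (M / (1 - gamma)).
    apply: (le_trans (ler_normB _ _)); have := FM 0; have := FM n%:R; lra.
  move: h; rewrite Fn normrM normr_nat; clearbody n; lra.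
apply: (hH i1 i0).
  by move=> /(congr1 (fun f => val (f 0%N))).
by move=> x; have := Dc x 0; rewrite D00.
Qed.

Lemma final_contra w x : condH b gamma phi ->
  (forall i j : nat -> 'I_b, S' b gamma phi x (wconcat w i) = S' b gamma phi x (wconcat w j)) -> False.
Proof.
move=> hH hall.
have [y hy] := T_prefix w x.
have zy : Z y.
  move=> i j; have := hy i j.
  have := hall i j; rewrite !S'T => ->.
  rewrite subrr => /esym /eqP; rewrite mulf_eq0 expf_eq0 (negbTE qn0) andbF /=.
  by rewrite subr_eq0 => /eqP.
exact: Zall_false hH (Z_all zy).
Qed.
End Final.

Unset Implicit Arguments.
Set Strict Implicit.

Theorem lemma6p3 (R : realType) (b : nat) (gamma : R) (phi : R -> R)
  (alpha : R)
  (hb : (2 <= b)%N) (hg0 : 0 < gamma) (hg1 : gamma < 1)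
  (han : real_analytic phi) (hper : Zperiodic phi)
  (hH : condH b gamma phi)
  (halpha : {ae (@lebesgue_measure R), forall x,
              exact_dimensional (mx b gamma phi x) alpha})
  (hlt : alpha < Num.min 1 (ln (b%:R : R) / ln (gamma^-1))) :
  forall v w : seq 'I_b, (0 < size v)%N -> (0 < size w)%N ->
    exists i j : nat -> 'I_b, i <> j /\
      exists2 x : R, Iv v x &
        S' b gamma phi x (wconcat w i) - S' b gamma phi x (wconcat w j) != 0.
Proof.
move=> v w _ _.
case: (pselect (exists i j : nat -> 'I_b, i <> j /\
      exists2 x : R, Iv v x &
        S' b gamma phi x (wconcat w i) - S' b gamma phi x (wconcat w j) != 0)) => // H.
exfalso.
pose x0 := wval R v / (b%:R : R) ^+ size v.
have Bv : 0 < (b%:R : R) ^+ size v by rewrite exprn_gt0 // (B0 R hb).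
have hx0 : Iv v x0.
  rewrite /Iv /x0 /= lexx /= ltr_pM2r ?invr_gt0 //; lra.
apply: (final_contra hb hg0 hg1 han hper (w := w) (x := x0) hH) => i j.
case: (pselect (i = j)) => [-> //|ne].
apply/eqP; rewrite -subr_eq0; apply/negPn/negP => hne.
by apply: H; exists i, j; split => //; exists x0.
Qed.
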